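(* Let $(X,\tau)$ be a topological space. Then: (i) every subset of $X$ is $\beta$-locally closed, and every function $f\colon (X,\tau)\to(Y,\sigma)$ into any topological space $(Y,\sigma)$ is $\beta$-LC-continuous; (ii) $(X,\tau)$ is $\beta$-submaximal.
   Context: For a subset $A$ of a topological space $(X,\tau)$, $\mathrm{cl}(A)$ and $\mathrm{int}(A)$ denote closure and interior. $A$ is $\beta$-open if $A \subseteq \mathrm{cl}(\mathrm{int}(\mathrm{cl}(A)))$, and $\beta$-closed if $X\setminus A$ is $\beta$-open. $A$ is $\beta$-locally closed if $A$ is the intersection of a $\beta$-open set and a $\beta$-closed set. The $\beta$-closure $\mathrm{cl}_\beta(A)$ is the intersection of all $\beta$-closed sets containing $A$; $A$ is $\beta$-dense if $\mathrm{cl}_\beta(A)=X$. The space $X$ is $\beta$-submaximal if every $\beta$-dense subset of $X$ is $\beta$-open. A function $f\colon (X,\tau)\to(Y,\sigma)$ is $\beta$-LC-continuous if $f^{-1}(V)$ is $\beta$-locally closed in $X$ for every open set $V\subseteq Y$. *)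

(* Defs.v *)
From HB Require Import structures.
From mathcomp Require Import all_boot all_order all_algebra.
From mathcomp Require Import all_classical all_reals all_analysis.
Set Implicit Arguments. Unset Strict Implicit. Unset Printing Implicit Defensive.
Local Open Scope classical_set_scope.

Section BetaDefs.
Variable X : topologicalType.

Definition beta_open (A : set X) : Prop :=
  A `<=` closure (interior (closure A)).

Definition beta_closed (A : set X) : Prop := beta_open (~` A).

Definition beta_locally_closed (A : set X) : Prop :=
  exists U F : set X, [/\ beta_open U, beta_closed F & A = U `&` F].

Definition beta_closure (A : set X) : set X :=
  \bigcap_(F in [set F : set X | beta_closed F /\ A `<=` F]) F.

Definition beta_dense (A : set X) : Prop := beta_closure A = setT.

Definition beta_submaximal : Prop :=
  forall A : set X, beta_dense A -> beta_open A.
End BetaDefs.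

Definition beta_LC_continuous (X Y : topologicalType) (f : X -> Y) : Prop :=
  forall V : set Y, open V -> beta_locally_closed (f @^-1` V).

(* Main.v *)
Require Import Defs.
From mathcomp Require Import all_boot all_order all_algebra.
From mathcomp Require Import all_classical all_reals all_analysis.
Local Open Scope classical_set_scope.

Lemma osi (X : topologicalType) (U B : set X) : open U -> U `<=` B -> U `<=` interior B.
Proof. by move=> oU; rewrite open_subsetE. Qed.
Arguments osi {X U B}.

Lemma open_beta (X : topologicalType) (U : set X) : open U -> beta_open U.
Proof.
move=> oU x Ux; apply: subset_closure.
exact: (osi oU (@subset_closure _ U) x Ux).
Qed.

Arguments open_beta {X U}.
Lemma dense_beta (X : topologicalType) (D : set X) :
  closure D = setT -> beta_open D.
Proof.
move=> cD x _; rewrite cD.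
have -> : interior (@setT X) = setT.
  by apply/seteqP; split => // y _; exact: (osi (@openT X) (fun z (h : setT z) => h) y I).
by rewrite -cD; apply: subset_closure; rewrite cD.
Qed.

Arguments dense_beta {X D}.
Lemma key (X : topologicalType) (G A : set X) : open G ->
  (forall y, G y -> ~ interior (closure A) y) ->
  G `<=` closure (G `&` ~` closure A).
Proof.
move=> oG H y Gy B By.
apply/set0P/negP => /eqP E.
have oW : open (G `&` interior B) by apply: openI => //; exact: open_interior.
have WA : G `&` interior B `<=` closure A.
  move=> z [Gz Bz]; case: (pselect (closure A z)) => [//|nz].
  have : (G `&` ~` closure A `&` B) z by split => //; exact: interior_subset.
  by rewrite E.
have {}WA := osi oW WA.
apply: (H y Gy); apply: WA; split => //.
Qed.

Arguments key {X G A}.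
Theorem corollary2p2 (X : topologicalType) :
  ((forall A : set X, beta_locally_closed A) /\
   (forall (Y : topologicalType) (f : X -> Y), beta_LC_continuous f)) /\
  beta_submaximal X.
Proof.
have LC : forall A : set X, beta_locally_closed A.
  move=> A; exists (A `|` ~` closure A), (closure A); split.
  - apply: dense_beta; apply/seteqP; split => // x _.
    case: (pselect (closure A x)) => Hx.
      by apply: (closureS (B := A `|` ~` closure A)) Hx => y Ay; left.
    by apply: subset_closure; right.
  - rewrite /beta_closed; apply: open_beta; rewrite openC; exact: closed_closure.
  - apply/seteqP; split => x.
      by move=> Ax; split; [left | apply: subset_closure].
    by move=> [[//|nx] cx].
split; first by split => // Y f V _; exact: LC.
move=> A dA x Ax.
set G := ~` closure (interior (closure A)).
case: (pselect (closure (interior (closure A)) x)) => [//|nGx].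
have oG : open G by rewrite /G openC; exact: closed_closure.
have HG : forall y, G y -> ~ interior (closure A) y.
  by move=> y Gy iy; apply: Gy; apply: subset_closure.
have bc : beta_closed (~` (G `&` ~` A)).
  rewrite /beta_closed setCK => y [Gy nAy].
  have := key oG HG y Gy; apply: closureS.
  have sub : G `&` ~` closure A `<=` closure (G `&` ~` A).
    move=> z [Gz nz]; apply: subset_closure; split => //.
    by move=> Az; apply: nz; apply: subset_closure.
  apply: (osi _ sub).
  apply: openI => //; rewrite openC; exact: closed_closure.
have GA : G `<=` A.
  move=> y Gy; case: (pselect (A y)) => [//|nAy].
  have : beta_closure A y by rewrite dA.
  by move=> /(_ (~` (G `&` ~` A))) h; exfalso; apply: h => //; split => // z Az [_ ?].
have : interior (closure A) x.
  have {}GA := osi oG GA.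
  by apply: (interiorS (@subset_closure _ A)); apply: GA.
by move=> h; exact: subset_closure.
Qed.
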